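(* For all positive integers $m,k,r$ and all complex $z$ with $|z|<1$, $$\sum_{\substack{k_1+\cdots+k_r=k+r-1\\ k_1,\ldots,k_r\ge1}}\binom{k_r+m-2}{m-1}\mathrm{A}(k_1,\ldots,k_{r-1},k_r+m-1;z)+(-1)^r\sum_{\substack{k_1+\cdots+k_r=m+r-1\\ k_1,\ldots,k_r\ge1}}\binom{k_r+k-2}{k-1}\mathrm{A}(k_1,\ldots,k_{r-1},k_r+k-1;z)$$ $$=\sum_{j=1}^{r-1}(-1)^{j-1}\,\mathrm{A}(\{1\}_{r-1-j},m;z)\,\mathrm{A}(\{1\}_{j-1},k;z).$$
   Context: $\{1\}_a$ denotes the sequence of $a$ ones. For positive integers $k_1,\dots,k_r$ and $|z|<1$, the Kaneko–Tsumura level-two multiple polylogarithm is $\mathrm{A}(k_1,\ldots,k_r;z):=2^r\sum\frac{z^{n_r}}{n_1^{k_1}n_2^{k_2}\cdots n_r^{k_r}}$, summed over integers $1\le n_1<n_2<\cdots<n_r$ with $n_j\equiv j \pmod 2$ for every $j$. *)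

(* Defs.v *)
From Stdlib Require Import Reals List Arith Bool.
From Coquelicot Require Import Coquelicot.
Import ListNotations.
Open Scope R_scope.

Fixpoint psum (f : nat -> R) (M : nat) : R :=
  match M with
  | O => 0
  | S p => psum f p + f p
  end.

(* Hs [k_j; ...; k_1] M = sum over 1 <= n_1 < ... < n_j < M with
   n_i = i (mod 2) of prod_i 1 / n_i ^ k_i.
   (The list is given in REVERSED order: its head is k_j, j = its length.) *)
Fixpoint Hs (rks : list nat) (M : nat) : R :=
  match rks with
  | nil => 1
  | k :: rest =>
      psum (fun n => if (1 <=? n)%nat && Bool.eqb (Nat.odd n) (Nat.odd (S (length rest)))
                     then Hs rest n / (INR n) ^ k else 0) M
  end.

(* Coefficient of z^N in A(k_1,...,k_r; z): 2^r times the sum of all terms of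
   the defining multiple sum with n_r = N. *)
Definition Acoef (ks : list nat) (N : nat) : R :=
  match rev ks with
  | nil => 0
  | k :: rest =>
      2 ^ (length ks) *
      (if (1 <=? N)%nat && Bool.eqb (Nat.odd N) (Nat.odd (length ks))
       then Hs rest N / (INR N) ^ k else 0)
  end.

Definition Apoly (ks : list nat) (z : C) : C :=
  lim (T := CompleteNormedModule.CompleteSpace _ C_CompleteNormedModule)
      (filtermap (sum_n (fun N : nat => Cmult (RtoC (Acoef ks N)) (Cpow z N))) eventually).

Fixpoint compositions (r K : nat) : list (list nat) :=
  match r with
  | O => if (K =? 0)%nat then [nil] else nil
  | S r' => flat_map (fun k => map (cons k) (compositions r' (K - k))) (seq 1 K)
  end.

Definition Csum {T : Type} (l : list T) (f : T -> C) : C :=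
  fold_right (fun x acc => Cplus (f x) acc) (RtoC 0) l.

Definition add_last (ks : list nat) (a : nat) : list nat :=
  removelast ks ++ [last ks 0%nat + a]%nat.

Definition Cbinom (n k : nat) : C := RtoC (Binomial.C n k).

(* Main.v *)
Require Import Defs.
From Stdlib Require Import Reals List Arith Lia Lra FunctionalExtensionality Bool.
From Coquelicot Require Import Coquelicot.
Import ListNotations.
Open Scope R_scope.

Lemma lim_pow (u : nat -> R) (l : R) p : is_lim_seq u l -> is_lim_seq (fun n => u n ^ p) (l ^ p).
Proof.
  intros H. induction p. simpl. apply is_lim_seq_const.
  simpl. apply is_lim_seq_mult'; auto.
Qed.

Lemma ratio_lim : is_lim_seq (fun n => (INR n + 2) / (INR n + 1)) 1.
Proof.
  apply is_lim_seq_ext with (fun n => 1 + / (INR n + 1)).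
  { intros n. pose proof (pos_INR n). field. lra. }
  assert (H0 : is_lim_seq (fun n => 1 + / (INR n + 1)) (1 + 0)).
  2:{ rewrite Rplus_0_r in H0; exact H0. }
  apply is_lim_seq_plus'. apply is_lim_seq_const.
  assert (H : is_lim_seq (fun n => / INR n) 0).
  { replace (Finite 0) with (Rbar_inv p_infty) by reflexivity.
    apply is_lim_seq_inv. apply is_lim_seq_INR. discriminate. }
  apply is_lim_seq_incr_1 in H.
  eapply is_lim_seq_ext. 2: exact H. intros n. cbv beta. rewrite S_INR. reflexivity.
Qed.

Lemma geom_poly p t : 0 < t < 1 -> ex_series (fun n => (INR n + 1) ^ p * t ^ n).
Proof.
  intros Ht.
  assert (Hpos : forall n, 0 < (INR n + 1) ^ p * t ^ n).
  { intros n. apply Rmult_lt_0_compat; apply pow_lt. pose proof (pos_INR n); lra. lra. }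
  eapply ex_series_ext.
  2: apply (ex_series_DAlembert (fun n => (INR n + 1) ^ p * t ^ n) t). 
  - intros n. simpl. rewrite Rabs_pos_eq. reflexivity. apply Rlt_le, Hpos.
  - lra.
  - intros n. apply Rgt_not_eq, Hpos.
  - eapply is_lim_seq_ext with (fun n => ((INR n + 2) / (INR n + 1)) ^ p * t).
    { intros n. rewrite Rabs_pos_eq.
      2:{ apply Rlt_le. unfold Rdiv. apply Rmult_lt_0_compat. apply Hpos. apply Rinv_0_lt_compat, Hpos. }
      rewrite S_INR.
      pose proof (pos_INR n).
      unfold Rdiv. rewrite Rpow_mult_distr. rewrite pow_inv.
      replace (INR n + 1 + 1) with (INR n + 2) by ring. simpl. field.
      repeat split; try apply pow_nonzero; lra. }
    assert (H1 : is_lim_seq (fun n => ((INR n + 2) / (INR n + 1)) ^ p * t) (Rbar_mult (1 ^ p) t)).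
    { apply is_lim_seq_scal_r. apply lim_pow. apply ratio_lim. }
    rewrite pow1 in H1. simpl in H1. rewrite Rmult_1_l in H1. exact H1.
Qed.

Definition pb (a : nat -> R) := exists M p, forall N, Rabs (a N) <= M * (INR N + 1) ^ p.

Lemma pb_abs_series a z : pb a -> Cmod z < 1 -> ex_series (fun N => Rabs (a N) * Cmod z ^ N).
Proof.
  intros [M [p HM]] Hz.
  set (t := (1 + Cmod z) / 2).
  pose proof (Cmod_ge_0 z).
  assert (Ht : 0 < t < 1) by (unfold t; lra).
  apply (ex_series_le (K := R_AbsRing) (V := R_CompleteNormedModule) _ (fun n => M * ((INR n + 1) ^ p * t ^ n))).
  - intros n. change norm with Rabs. rewrite Rabs_pos_eq.
    2:{ apply Rmult_le_pos. apply Rabs_pos. apply pow_le; lra. }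
    rewrite <- Rmult_assoc. apply Rmult_le_compat. apply Rabs_pos. apply pow_le; lra.
    apply HM. apply pow_incr. unfold t; lra.
  - apply (ex_series_scal_l (K := R_AbsRing) (V := R_NormedModule) M (fun n => (INR n + 1) ^ p * t ^ n)). apply geom_poly. exact Ht.
Qed.
Definition CT := CompleteNormedModule.CompleteSpace _ C_CompleteNormedModule.
Definition Sv (a : nat -> R) (z : C) : C :=
  lim (T := CT) (filtermap (sum_n (fun N : nat => Cmult (RtoC (a N)) (Cpow z N))) eventually).

Lemma lim_series (b : nat -> C) (l : C) :
  is_series b l -> lim (T := CT) (filtermap (sum_n b) eventually) = l.
Proof.
  intros H.
  unfold is_series in H.
  assert (PF : ProperFilter (filtermap (sum_n b) eventually)).
  { apply filtermap_proper_filter; apply eventually_filter. }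
  assert (Hc : cauchy (T := CT) (filtermap (sum_n b) eventually)).
  { apply cauchy_distance.
    intros e.
    destruct (H (ball l (pos_div_2 e))) as [N HN]. exists (pos_div_2 e). tauto.
    exists (ball l (pos_div_2 e)). split. exists N. exact HN.
    intros u v Hu Hv. replace (pos e) with (pos_div_2 e + pos_div_2 e) by (simpl; lra).
    apply ball_triangle with l. apply ball_sym. exact Hu. exact Hv. }
  pose proof (complete_cauchy (T := CT) (filtermap (sum_n b) eventually) PF Hc) as Hl.
  apply (is_filter_lim_unique (K := C_AbsRing) (V := C_NormedModule) (F := filtermap (sum_n b) eventually)).

  - intros P [eps HP]. eapply filter_imp. 2: apply (Hl eps). intros x Hx. apply HP. exact Hx.
  - exact H.
Qed.
Lemma Re_sum_n (a : nat -> C) N : Re (sum_n a N) = sum_n (fun n => Re (a n)) N.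
Proof.
  induction N. rewrite !sum_O. reflexivity.
  rewrite !sum_Sn, <- IHN. reflexivity.
Qed.
Lemma Im_sum_n (a : nat -> C) N : Im (sum_n a N) = sum_n (fun n => Im (a n)) N.
Proof.
  induction N. rewrite !sum_O. reflexivity.
  rewrite !sum_Sn, <- IHN. reflexivity.
Qed.

Lemma C_series_split (a : nat -> C) (l : C) :
  is_series a l <-> (is_series (fun n => Re (a n)) (Re l) /\ is_series (fun n => Im (a n)) (Im l)).
Proof.
  split.
  - intros H. split.
    + intros P [eps HP].
      destruct (H (fun x => P (Re x))) as [N HN].
      { exists eps. intros y Hy. apply HP. destruct Hy as [Hy1 Hy2]. exact Hy1. }
      exists N. intros n Hn. simpl. rewrite <- Re_sum_n. apply HN; auto.
    + intros P [eps HP].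
      destruct (H (fun x => P (Im x))) as [N HN].
      { exists eps. intros y Hy. apply HP. destruct Hy as [Hy1 Hy2]. exact Hy2. }
      exists N. intros n Hn. simpl. rewrite <- Im_sum_n. apply HN; auto.
  - intros [H1 H2]. intros P [eps HP].
    destruct (H1 (ball (Re l) eps)) as [N1 HN1]. exists eps; tauto.
    destruct (H2 (ball (Im l) eps)) as [N2 HN2]. exists eps; tauto.
    exists (max N1 N2). intros n Hn.
    apply HP. split.
    + pose proof (HN1 n ltac:(lia)) as X. simpl in X. rewrite <- Re_sum_n in X. exact X.
    + pose proof (HN2 n ltac:(lia)) as X. simpl in X. rewrite <- Im_sum_n in X. exact X.
Qed.

Lemma im_le_Cmod' (c : C) : Rabs (Im c) <= Cmod c.
Proof.
  destruct c as [x y]. unfold Cmod. simpl.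
  rewrite <- sqrt_Rsqr_abs. apply sqrt_le_1_alt. unfold Rsqr. nra.
Qed.

Lemma sum_n_R_minus (u v : nat -> R) n : sum_n (fun k => u k - v k) n = sum_n u n - sum_n v n.
Proof. induction n. rewrite !sum_O. auto. rewrite !sum_Sn, IHn. unfold plus; simpl. ring. Qed.
Lemma sum_n_R_plus (u v : nat -> R) n : sum_n (fun k => u k + v k) n = sum_n u n + sum_n v n.
Proof. induction n. rewrite !sum_O. auto. rewrite !sum_Sn, IHn. unfold plus; simpl. ring. Qed.

Lemma C_series_mult (A B : nat -> C) la lb :
  is_series A la -> is_series B lb ->
  ex_series (fun n => Cmod (A n)) -> ex_series (fun n => Cmod (B n)) ->
  is_series (fun n => sum_n (fun k => Cmult (A k) (B (n - k)%nat)) n) (Cmult la lb).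
Proof.
  intros HA HB EA EB.
  apply C_series_split in HA as [HA1 HA2].
  apply C_series_split in HB as [HB1 HB2].
  assert (Hab : forall (U : nat -> C) f, (forall c, Rabs (f c) <= Cmod c) -> ex_series (fun n => Cmod (U n)) -> ex_series (fun n => Rabs (f (U n)))).
  { intros U f Hf EU. apply (ex_series_le (K := R_AbsRing) (V := R_CompleteNormedModule) _ (fun n => Cmod (U n))); auto.
    intros n. change norm with Rabs. rewrite Rabs_Rabsolu. apply Hf. }
  pose proof (is_series_mult _ _ _ _ HA1 HB1 (Hab _ _ re_le_Cmod EA) (Hab _ _ re_le_Cmod EB)) as M11.
  pose proof (is_series_mult _ _ _ _ HA2 HB2 (Hab _ _ im_le_Cmod' EA) (Hab _ _ im_le_Cmod' EB)) as M22.
  pose proof (is_series_mult _ _ _ _ HA1 HB2 (Hab _ _ re_le_Cmod EA) (Hab _ _ im_le_Cmod' EB)) as M12.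
  pose proof (is_series_mult _ _ _ _ HA2 HB1 (Hab _ _ im_le_Cmod' EA) (Hab _ _ re_le_Cmod EB)) as M21.
  apply C_series_split. split.
  - pose proof (is_series_minus _ _ _ _ M11 M22) as X.
    eapply is_series_ext. 2: exact X.
    intros n. rewrite Re_sum_n, <- !sum_n_Reals. unfold plus, opp; simpl.
    rewrite sum_n_R_minus. unfold Re, Im. ring.
  - pose proof (is_series_plus _ _ _ _ M12 M21) as X.
    eapply is_series_ext. 2: exact X.
    intros n. rewrite Im_sum_n, <- !sum_n_Reals. unfold plus; simpl.
    rewrite sum_n_R_plus. unfold Re, Im. ring.
Qed.

Lemma c_proj_eq (a b : C) : fst a = fst b -> snd a = snd b -> a = b.
Proof. destruct a, b; simpl; intros; subst; reflexivity. Qed.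

Definition cser (a : nat -> R) (z : C) (N : nat) : C := Cmult (RtoC (a N)) (Cpow z N).

Lemma Cmod_cser a z N : Cmod (cser a z N) = Rabs (a N) * Cmod z ^ N.
Proof. unfold cser. rewrite Cmod_mult, Cmod_R, Cmod_pow. reflexivity. Qed.

Lemma Sv_correct a z : pb a -> Cmod z < 1 -> is_series (cser a z) (Sv a z).
Proof.
  intros Ha Hz.
  assert (E : ex_series (K := C_AbsRing) (V := C_NormedModule) (cser a z)).
  { apply (ex_series_le (K := C_AbsRing) (V := C_CompleteNormedModule) _ (fun N => Rabs (a N) * Cmod z ^ N)).
    - intros n. change norm with Cmod. rewrite Cmod_cser. apply Rle_refl.
    - apply pb_abs_series; auto. }
  destruct E as [l Hl]. unfold Sv. fold (cser a z).
  rewrite (lim_series _ _ Hl). exact Hl.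
Qed.

Lemma Sv_unique a z l : is_series (cser a z) l -> Sv a z = l.
Proof. intros H. unfold Sv. fold (cser a z). apply lim_series. exact H. Qed.

Lemma pb_plus a b : pb a -> pb b -> pb (fun N => a N + b N).
Proof.
  intros [M1 [p1 H1]] [M2 [p2 H2]]. exists (M1 + M2), (p1 + p2)%nat. intros N.
  assert (X : 1 <= INR N + 1) by (pose proof (pos_INR N); lra).
  assert (M1 >= 0). { specialize (H1 O). simpl INR in H1. rewrite Rplus_0_l, pow1 in H1. pose proof (Rabs_pos (a O)). nra. }
  assert (M2 >= 0). { specialize (H2 O). simpl INR in H2. rewrite Rplus_0_l, pow1 in H2. pose proof (Rabs_pos (b O)). nra. }
  eapply Rle_trans. apply Rabs_triang.
  rewrite pow_add, Rmult_plus_distr_r.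
  apply Rplus_le_compat.
  - eapply Rle_trans. apply H1. rewrite <- Rmult_assoc. rewrite <- (Rmult_1_r (M1 * _)) at 1.
    apply Rmult_le_compat_l. apply Rmult_le_pos. lra. apply pow_le; lra. apply pow_R1_Rle. lra.
  - eapply Rle_trans. apply H2. rewrite (Rmult_comm ((INR N + 1) ^ p1)), <- Rmult_assoc. rewrite <- (Rmult_1_r (M2 * _)) at 1.
    apply Rmult_le_compat_l. apply Rmult_le_pos. lra. apply pow_le; lra. apply pow_R1_Rle. lra.
Qed.

Lemma pb_scal c a : pb a -> pb (fun N => c * a N).
Proof.
  intros [M [p H]]. exists (Rabs c * M), p. intros N. rewrite Rabs_mult, Rmult_assoc.
  apply Rmult_le_compat_l. apply Rabs_pos. apply H.
Qed.

Lemma pb_zero : pb (fun _ => 0).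
Proof. exists 0, O. intros. rewrite Rabs_R0. lra. Qed.

Lemma Sv_plus a b z : pb a -> pb b -> Cmod z < 1 -> Sv (fun N => a N + b N) z = Cplus (Sv a z) (Sv b z).
Proof.
  intros Ha Hb Hz. apply Sv_unique.
  eapply is_series_ext. 2: apply (is_series_plus _ _ _ _ (Sv_correct _ _ Ha Hz) (Sv_correct _ _ Hb Hz)).
  intros n. unfold cser. apply c_proj_eq; simpl; ring.
Qed.

Lemma Sv_scal c a z : pb a -> Cmod z < 1 -> Sv (fun N => c * a N) z = Cmult (RtoC c) (Sv a z).
Proof.
  intros Ha Hz. apply Sv_unique.
  eapply is_series_ext. 2: apply (is_series_scal (K := C_AbsRing) (RtoC c) _ _ (Sv_correct _ _ Ha Hz)).
  intros n. unfold cser. change scal with Cmult. apply c_proj_eq; simpl; ring.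
Qed.

Lemma Sv_zero z : Cmod z < 1 -> Sv (fun _ => 0) z = RtoC 0.
Proof.
  intros Hz. transitivity (Sv (fun N => 0 * (fun _ => 0) N) z).
  - f_equal. apply FunctionalExtensionality.functional_extensionality. intros; ring.
  - rewrite Sv_scal; auto using pb_zero. apply c_proj_eq; simpl; ring.
Qed.

Definition cprod (f g : nat -> R) (N : nat) : R := sum_n (fun i => f i * g (N - i)%nat) N.

Lemma sum_n_bound (u : nat -> R) c N : (forall i, (i <= N)%nat -> Rabs (u i) <= c) -> Rabs (sum_n u N) <= INR (S N) * c.
Proof.
  induction N; intros H.
  - rewrite sum_O. simpl. rewrite Rmult_1_l. apply H. lia.
  - rewrite sum_Sn. change (Rabs (sum_n u N + u (S N)) <= INR (S (S N)) * c).
    eapply Rle_trans. apply Rabs_triang. rewrite (S_INR (S N)), Rmult_plus_distr_r, Rmult_1_l.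
    apply Rplus_le_compat. apply IHN. intros; apply H; lia. apply H; lia.
Qed.

Lemma pb_nonneg a M p : (forall N, Rabs (a N) <= M * (INR N + 1) ^ p) -> 0 <= M.
Proof. intros H. specialize (H O). simpl INR in H. rewrite Rplus_0_l, pow1 in H. pose proof (Rabs_pos (a O)). lra. Qed.

Lemma pb_cprod f g : pb f -> pb g -> pb (cprod f g).
Proof.
  intros [M1 [p1 H1]] [M2 [p2 H2]].
  pose proof (pb_nonneg _ _ _ H1). pose proof (pb_nonneg _ _ _ H2).
  exists (M1 * M2), (S (p1 + p2)). intros N. unfold cprod.
  eapply Rle_trans. apply (sum_n_bound _ (M1 * M2 * (INR N + 1) ^ (p1 + p2))).
  - intros i Hi. rewrite Rabs_mult, pow_add.
    replace (M1 * M2 * ((INR N + 1) ^ p1 * (INR N + 1) ^ p2)) with ((M1 * (INR N + 1) ^ p1) * (M2 * (INR N + 1) ^ p2)) by ring.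
    apply Rmult_le_compat; try apply Rabs_pos.
    + eapply Rle_trans. apply H1. apply Rmult_le_compat_l. lra. apply pow_incr. split.
      pose proof (pos_INR i); lra. apply le_INR in Hi. lra.
    + eapply Rle_trans. apply H2. apply Rmult_le_compat_l. lra. apply pow_incr. split.
      pose proof (pos_INR (N - i)); lra. assert (Hl : (N - i <= N)%nat) by lia. apply le_INR in Hl. lra.
  - rewrite S_INR. simpl pow. lra.
Qed.

Lemma RtoC_sum_n_mult (u : nat -> R) (w : C) n : Cmult (RtoC (sum_n u n)) w = sum_n (fun k => Cmult (RtoC (u k)) w) n.
Proof.
  induction n.
  - rewrite !sum_O. reflexivity.
  - rewrite !sum_Sn, <- IHn. unfold plus. simpl. apply c_proj_eq; simpl; ring.
Qed.

Lemma Sv_mult f g z : pb f -> pb g -> Cmod z < 1 -> Sv (cprod f g) z = Cmult (Sv f z) (Sv g z).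
Proof.
  intros Hf Hg Hz. apply Sv_unique.
  assert (E : forall a, pb a -> ex_series (fun n => Cmod (cser a z n))).
  { intros a Ha. eapply ex_series_ext. 2: apply (pb_abs_series a z Ha Hz). intros n. simpl. rewrite Cmod_cser. reflexivity. }
  eapply is_series_ext. 2: apply (C_series_mult _ _ _ _ (Sv_correct _ _ Hf Hz) (Sv_correct _ _ Hg Hz) (E _ Hf) (E _ Hg)).
  intros n. unfold cser at 3, cprod. rewrite RtoC_sum_n_mult.
  apply sum_n_ext_loc. intros k Hk. unfold cser.
  replace (Cpow z n) with (Cmult (Cpow z k) (Cpow z (n - k))) by (rewrite <- Cpow_add_r; f_equal; lia).
  apply c_proj_eq; simpl; ring.
Qed.

Definition rsum {T : Type} (l : list T) (f : T -> R) : R :=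
  fold_right (fun x acc => f x + acc) 0 l.

Lemma rsum_app {T} (l1 l2 : list T) f : rsum (l1 ++ l2) f = rsum l1 f + rsum l2 f.
Proof. induction l1; simpl. ring. rewrite IHl1. ring. Qed.
Lemma rsum_map {T U} (h : T -> U) l f : rsum (map h l) f = rsum l (fun x => f (h x)).
Proof. induction l; simpl; auto. rewrite IHl; auto. Qed.
Lemma rsum_flat_map {T U} (g : T -> list U) l f : rsum (flat_map g l) f = rsum l (fun x => rsum (g x) f).
Proof. induction l; simpl; auto. rewrite rsum_app, IHl; auto. Qed.
Lemma rsum_ext_in {T} (l : list T) f g : (forall x, In x l -> f x = g x) -> rsum l f = rsum l g.
Proof. induction l; simpl; intros H; auto. rewrite H, IHl; auto. Qed.
Lemma rsum_ext {T} (l : list T) f g : (forall x, f x = g x) -> rsum l f = rsum l g.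
Proof. intros; apply rsum_ext_in; auto. Qed.
Lemma rsum_plus {T} (l : list T) f g : rsum l (fun x => f x + g x) = rsum l f + rsum l g.
Proof. induction l; simpl. ring. rewrite IHl. ring. Qed.
Lemma rsum_scal {T} (l : list T) c f : rsum l (fun x => c * f x) = c * rsum l f.
Proof. induction l; simpl. ring. rewrite IHl. ring. Qed.
Lemma rsum_zero {T} (l : list T) f : (forall x, In x l -> f x = 0) -> rsum l f = 0.
Proof. intros H. rewrite (rsum_ext_in _ _ (fun _ => 0)); auto. clear H. induction l; simpl; auto. rewrite IHl. ring. Qed.
Lemma rsum_seq_S1 (K : nat) g : rsum (seq 1 (S K)) g = g 1%nat + rsum (seq 1 K) (fun k => g (S k)).
Proof. simpl. rewrite <- seq_shift, rsum_map. reflexivity. Qed.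
Lemma rsum_seq_last (K : nat) g : rsum (seq 1 (S K)) g = rsum (seq 1 K) g + g (S K).
Proof. rewrite seq_S, rsum_app. simpl. ring. Qed.

Lemma rsum_swap (K : nat) (h : nat -> nat -> R) :
  rsum (seq 1 K) (fun k => rsum (seq 1 (K - k)) (fun l => h k l)) =
  rsum (seq 1 K) (fun l => rsum (seq 1 (K - l)) (fun k => h k l)).
Proof.
  revert h. induction K; intros h. reflexivity.
  rewrite rsum_seq_S1.
  replace (S K - 1)%nat with K by lia.
  rewrite (rsum_ext (seq 1 K) (fun k => rsum (seq 1 (S K - S k)) (fun l => h (S k) l))
                    (fun k => rsum (seq 1 (K - k)) (fun l => h (S k) l))).
  2:{ intros k. reflexivity. }
  rewrite (IHK (fun k l => h (S k) l)).
  rewrite rsum_seq_last. replace (S K - S K)%nat with O by lia. simpl rsum at 3.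
  rewrite Rplus_0_r, <- rsum_plus.
  apply rsum_ext_in. intros l Hl. apply in_seq in Hl.
  replace (S K - l)%nat with (S (K - l)) by lia. rewrite rsum_seq_S1. reflexivity.
Qed.

Ltac Rfix := match goal with |- ?a = ?b => change (@eq R a b) end.

Lemma sum_Sn_R (a : nat -> R) N : sum_n a (S N) = sum_n a N + a (S N).
Proof. rewrite sum_Sn. reflexivity. Qed.

Lemma sum_n_front (a : nat -> R) N : sum_n a (S N) = a O + sum_n (fun i => a (S i)) N.
Proof.
  induction N.
  - rewrite sum_Sn, !sum_O. reflexivity.
  - rewrite sum_Sn, IHN, (sum_Sn (fun i => a (S i))). unfold plus; simpl. ring.
Qed.

Lemma sum_n_zero (u : nat -> R) N : (forall i, (i <= N)%nat -> u i = 0) -> sum_n u N = 0.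
Proof.
  induction N; intros H. rewrite sum_O; apply H; lia.
  rewrite sum_Sn, IHN. rewrite H. unfold plus; simpl; ring. lia. intros; apply H; lia.
Qed.

Lemma sum_n_rev (u : nat -> R) N : sum_n (fun i => u (N - i)%nat) N = sum_n u N.
Proof.
  induction N.
  - rewrite !sum_O. reflexivity.
  - rewrite sum_n_front. simpl (S N - 0)%nat.
    rewrite (sum_n_ext (fun i => u (S N - S i)%nat) (fun i => u (N - i)%nat)) by (intros; reflexivity).
    rewrite IHN, sum_Sn. unfold plus; simpl; ring.
Qed.

Lemma sum_n_shift (F : nat -> R) j M :
  sum_n (fun i => if (j <=? i)%nat then F i else 0) (j + M) = sum_n (fun l => F (j + l)%nat) M.
Proof.
  revert F. induction j; intros F.
  - simpl. apply sum_n_ext. intros; reflexivity.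
  - simpl (S j + M)%nat. rewrite sum_n_front. simpl (S j <=? 0)%nat.
    rewrite Rplus_0_l.
    rewrite (sum_n_ext (fun i => if (S j <=? S i)%nat then F (S i) else 0) (fun i => if (j <=? i)%nat then F (S i) else 0)).
    2:{ intros i. reflexivity. }
    rewrite (IHj (fun i => F (S i))). apply sum_n_ext. intros; reflexivity.
Qed.

Lemma sum_n_extend (F : nat -> R) i N : (i <= N)%nat ->
  sum_n F i = sum_n (fun j => if (j <=? i)%nat then F j else 0) N.
Proof.
  induction N; intros H.
  - replace i with O by lia. rewrite !sum_O. reflexivity.
  - destruct (Nat.eq_dec i (S N)).
    + subst. apply sum_n_ext_loc. intros n Hn. replace (n <=? S N)%nat with true; auto. symmetry; apply Nat.leb_le; auto.
    + rewrite sum_Sn_R, <- IHN by lia. replace (S N <=? i)%nat with false. simpl. symmetry; apply Rplus_0_r.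
      symmetry; apply Nat.leb_gt; lia.
Qed.

Lemma sum_n_Rmult_r (u : nat -> R) a n : sum_n u n * a = sum_n (fun k => u k * a) n.
Proof. induction n. rewrite !sum_O; auto. rewrite !sum_Sn_R, <- IHn. ring. Qed.
Lemma sum_n_Rmult_l (u : nat -> R) a n : a * sum_n u n = sum_n (fun k => a * u k) n.
Proof. induction n. rewrite !sum_O; auto. rewrite !sum_Sn_R, <- IHn. ring. Qed.

Definition th (f : nat -> R) (N : nat) : R := INR N * f N.
Definition delta0 (N : nat) : R := if (N =? 0)%nat then 1 else 0.
Definition Jf (N : nat) : R := if Nat.odd N then 2 else 0.

Lemma cprod_comm f g : cprod f g = cprod g f.
Proof.
  apply functional_extensionality. intros N. unfold cprod.
  rewrite <- sum_n_rev. apply sum_n_ext_loc. intros i Hi.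
  replace (N - (N - i))%nat with i by lia. apply Rmult_comm.
Qed.

Lemma cprod_assoc f g h : cprod (cprod f g) h = cprod f (cprod g h).
Proof.
  apply functional_extensionality. intros N. unfold cprod.
  transitivity (sum_n (fun i => sum_n (fun j => if (j <=? i)%nat then f j * g (i - j)%nat * h (N - i)%nat else 0) N) N).
  - apply sum_n_ext_loc. intros i Hi. rewrite sum_n_Rmult_r.
    rewrite (sum_n_extend _ i N Hi). apply sum_n_ext. intros j.
    destruct (j <=? i)%nat; Rfix; ring.
  - rewrite sum_n_switch. apply sum_n_ext_loc. intros j Hj.
    rewrite sum_n_Rmult_l.
    replace N with (j + (N - j))%nat at 1 by lia.
    rewrite (sum_n_shift (fun i => f j * g (i - j)%nat * h (N - i)%nat) j (N - j)).
    apply sum_n_ext. intros l.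
    replace (j + l - j)%nat with l by lia. replace (N - (j + l))%nat with (N - j - l)%nat by lia. Rfix; ring.
Qed.

Lemma cprod_delta f : cprod f delta0 = f.
Proof.
  apply functional_extensionality. intros N. unfold cprod. destruct N.
  - rewrite sum_O. unfold delta0. simpl. ring.
  - rewrite sum_Sn, sum_n_zero. replace (S N - S N)%nat with O by lia. unfold plus, delta0; simpl. ring.
    intros i Hi. unfold delta0. replace (S N - i =? 0)%nat with false. ring. symmetry; apply Nat.eqb_neq; lia.
Qed.

Lemma cprod_delta_l f : cprod delta0 f = f.
Proof. rewrite cprod_comm. apply cprod_delta. Qed.

Lemma cprod_plus_r f g h : cprod f (fun N => g N + h N) = fun N => cprod f g N + cprod f h N.
Proof.
  apply functional_extensionality. intros N. unfold cprod. rewrite <- sum_n_R_plus.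
  apply sum_n_ext. intros; Rfix; ring.
Qed.

Lemma cprod_scal_r f c g : cprod f (fun N => c * g N) = fun N => c * cprod f g N.
Proof.
  apply functional_extensionality. intros N. unfold cprod. rewrite sum_n_Rmult_l.
  apply sum_n_ext. intros; Rfix; ring.
Qed.

Lemma cprod_zero_r f : cprod f (fun _ => 0) = fun _ => 0.
Proof.
  apply functional_extensionality. intros N. unfold cprod. apply sum_n_zero. intros; Rfix; ring.
Qed.

Lemma cprod_rsum_r {T} f (l : list T) (G : T -> nat -> R) :
  cprod f (fun N => rsum l (fun x => G x N)) = fun N => rsum l (fun x => cprod f (G x) N).
Proof.
  induction l; simpl.
  - apply cprod_zero_r.
  - rewrite cprod_plus_r, IHl. reflexivity.
Qed.

Lemma th_cprod f g : th (cprod f g) = fun N => cprod (th f) g N + cprod f (th g) N.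
Proof.
  apply functional_extensionality. intros N. unfold th, cprod.
  rewrite <- sum_n_R_plus, sum_n_Rmult_l.
  apply sum_n_ext_loc. intros i Hi. rewrite minus_INR by lia. Rfix; ring.
Qed.

Lemma th_unique f g : f O = g O -> th f = th g -> f = g.
Proof.
  intros H0 H. apply functional_extensionality. intros N. destruct N; auto.
  apply (f_equal (fun h => h (S N))) in H. unfold th in H.
  apply Rmult_eq_reg_l in H; auto. apply not_0_INR; lia.
Qed.

Lemma cprod_at0 f g : cprod f g O = f O * g O.
Proof. unfold cprod. rewrite sum_O. reflexivity. Qed.

Definition ac (ks : list nat) : nat -> R :=
  match ks with [] => delta0 | _ :: _ => Acoef ks end.

Lemma ac_app ks y : ac (ks ++ [y]) = Acoef (ks ++ [y]).
Proof. destruct ks; reflexivity. Qed.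

Lemma Acoef_app ks y N : Acoef (ks ++ [y]) N = 2 ^ (S (length ks)) *
  (if (1 <=? N)%nat && Bool.eqb (Nat.odd N) (Nat.odd (S (length ks))) then Hs (rev ks) N / INR N ^ y else 0).
Proof.
  unfold Acoef. rewrite rev_app_distr. simpl (rev [y]). simpl app.
  rewrite length_app. simpl length. rewrite Nat.add_1_r. reflexivity.
Qed.

Lemma psum_S f N : psum f (S N) = sum_n f N.
Proof. induction N. simpl. rewrite sum_O. ring. simpl psum. rewrite sum_Sn_R, <- IHN. reflexivity. Qed.

Lemma psum_scal c f N : psum (fun n => c * f n) N = c * psum f N.
Proof. induction N; simpl. ring. rewrite IHN. ring. Qed.

Lemma odd_S n : Nat.odd (S n) = negb (Nat.odd n).
Proof. rewrite Nat.odd_succ, <- Nat.negb_odd. reflexivity. Qed.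

Lemma AR1 ks x : th (ac (ks ++ [S x])) = ac (ks ++ [x]).
Proof.
  apply functional_extensionality. intros N. unfold th. rewrite !ac_app, !Acoef_app.
  destruct ((1 <=? N)%nat && _) eqn:E.
  - apply andb_prop in E as [E1 _]. apply Nat.leb_le in E1.
    assert (INR N <> 0) by (apply not_0_INR; lia).
    simpl pow. field. split; auto. apply pow_nonzero; auto.
  - ring.
Qed.

Lemma ac_supp ks n : Nat.odd n <> Nat.odd (length ks) -> ac ks n = 0.
Proof.
  intros H. destruct ks as [|k ks'].
  - simpl in H. unfold delta0. destruct n; auto. simpl in H. congruence.
  - unfold ac, Acoef. destruct (rev (k :: ks')). reflexivity.
    replace (Bool.eqb (Nat.odd n) (Nat.odd (length (k :: ks')))) with false.
    rewrite andb_false_r. ring.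
    symmetry. apply eqb_false_iff. auto.
Qed.

Lemma ac_at0 ks : ks <> [] -> ac ks O = 0.
Proof.
  intros H. destruct ks as [|k ks']. congruence.
  unfold ac, Acoef. destruct (rev (k :: ks')). reflexivity. simpl. ring.
Qed.

Lemma Hs_rev ks N : (1 <= N)%nat -> 2 ^ (length ks) * Hs (rev ks) N = psum (ac ks) N.
Proof.
  intros HN. destruct ks as [|k0 ks'].
  - simpl. destruct N. lia. rewrite psum_S. clear HN. induction N.
    + rewrite sum_O. unfold delta0; simpl; ring.
    + rewrite sum_Sn_R, <- IHN. unfold delta0; simpl; ring.
  - unfold ac. unfold Acoef.
    destruct (rev (k0 :: ks')) as [|k rest] eqn:E.
    { apply (f_equal (@length nat)) in E. rewrite length_rev in E. simpl in E. lia. }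
    assert (HL : length (k0 :: ks') = S (length rest)).
    { apply (f_equal (@length nat)) in E. rewrite length_rev in E. simpl in E. simpl. lia. }
    rewrite HL. simpl Hs. rewrite <- psum_scal. reflexivity.
Qed.

Lemma cprod_at0' f g : cprod f g O = f O * g O.
Proof. apply cprod_at0. Qed.

Lemma AR2 ks : th (ac (ks ++ [1%nat])) = cprod Jf (ac ks).
Proof.
  apply functional_extensionality. intros N. unfold th. rewrite ac_app, Acoef_app.
  set (L := length ks).
  destruct N as [|N'].
  - rewrite cprod_at0. unfold Jf. simpl. ring.
  - set (N := S N').
    unfold cprod. rewrite <- sum_n_rev.
    destruct (Bool.eqb (Nat.odd N) (Nat.odd (S L))) eqn:E.
    + apply eqb_prop in E. rewrite odd_S in E.
      replace ((1 <=? N)%nat && true) with true by (unfold N; reflexivity).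
      assert (HN : INR N <> 0) by (apply not_0_INR; unfold N; lia).
      replace (INR N * (2 ^ S L * (Hs (rev ks) N / INR N ^ 1))) with (2 * (2 ^ L * Hs (rev ks) N))
        by (change (2 ^ S L) with (2 * 2 ^ L); change (INR N ^ 1) with (INR N * 1); field; auto).
      unfold L at 1. rewrite Hs_rev by (unfold N; lia).
      rewrite (sum_n_ext_loc _ (fun n => 2 * ac ks n)).
      * rewrite <- sum_n_Rmult_l. rewrite <- psum_S.
        change (psum (ac ks) (S N)) with (psum (ac ks) N + ac ks N).
        rewrite (ac_supp ks N). ring. rewrite E. fold L.
        intros Hc. destruct (Nat.odd L); simpl in *; congruence.
      * intros n Hn. replace (N - (N - n))%nat with n by lia.
        destruct (Bool.bool_dec (Nat.odd n) (Nat.odd L)) as [e|e].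
        -- unfold Jf. rewrite Nat.odd_sub by lia. rewrite E, e.
           destruct (Nat.odd L); simpl; Rfix; ring.
        -- rewrite ac_supp by auto. Rfix; ring.
    + rewrite andb_false_r. rewrite sum_n_zero. ring.
      intros n Hn. replace (N - (N - n))%nat with n by lia.
      apply eqb_false_iff in E. rewrite odd_S in E.
      destruct (Bool.bool_dec (Nat.odd n) (Nat.odd L)) as [e|e].
      * unfold Jf. rewrite Nat.odd_sub by lia. rewrite e.
        destruct (Nat.odd N), (Nat.odd L); simpl in *; try congruence; Rfix; ring.
      * rewrite ac_supp by auto. Rfix; ring.
Qed.

Fixpoint binn (n k : nat) : nat :=
  match n, k with
  | _, O => 1%nat
  | O, S _ => 0%nat
  | S n', S k' => (binn n' k' + binn n' (S k'))%nat
  end.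

Lemma binn_gt n k : (n < k)%nat -> binn n k = 0%nat.
Proof.
  revert k. induction n; intros k H; destruct k; try lia; simpl; auto.
  rewrite !IHn by lia. reflexivity.
Qed.

Lemma binn_nn n : binn n n = 1%nat.
Proof. induction n; simpl; auto. rewrite IHn, binn_gt by lia. reflexivity. Qed.

Lemma binom_binn n k : (k <= n)%nat -> Binomial.C n k = INR (binn n k).
Proof.
  revert k. induction n; intros k H.
  - replace k with O by lia. rewrite C_n_0. reflexivity.
  - destruct k. rewrite C_n_0. reflexivity.
    simpl binn. rewrite plus_INR.
    destruct (Nat.eq_dec k n).
    + subst. rewrite C_n_n, binn_nn, (binn_gt n (S n) (Nat.lt_succ_diag_r n)). simpl. ring.
    + rewrite <- pascal by lia. rewrite !IHn by lia. reflexivity.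
Qed.

Lemma comp_In r K ks : In ks (compositions r K) -> length ks = r /\ (forall x, In x ks -> (1 <= x)%nat).
Proof.
  revert K ks. induction r; intros K ks H; simpl in H.
  - destruct (K =? 0)%nat; simpl in H; [destruct H as [H|[]]; subst; simpl; split; auto; intros _ [] | destruct H].
  - apply in_flat_map in H as [k [Hk H]]. apply in_map_iff in H as [ks' [E H]]. subst.
    apply IHr in H as [H1 H2]. apply in_seq in Hk. simpl. split; auto. intros x [Hx|Hx]; subst; auto. lia.
Qed.

Lemma comp_nonnil r K ks : In ks (compositions (S r) K) -> ks <> [].
Proof. intros H. apply comp_In in H as [H _]. intros E; subst; discriminate. Qed.

Lemma flat_map_nil {A B} (f : A -> list B) l : (forall x, In x l -> f x = []) -> flat_map f l = [].
Proof. induction l; simpl; intros H; auto. rewrite H, IHl; auto. Qed.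

Lemma comp_lt r K : (K < r)%nat -> compositions r K = [].
Proof.
  revert K. induction r; intros K H. lia.
  simpl. apply flat_map_nil. intros k Hk. apply in_seq in Hk. rewrite IHr by lia. reflexivity.
Qed.

Lemma comp_rr r : compositions r r = [repeat 1%nat r].
Proof.
  induction r. reflexivity.
  simpl. replace (r - 0)%nat with r by lia. rewrite IHr. simpl.
  rewrite flat_map_nil. reflexivity.
  intros k Hk. apply in_seq in Hk. destruct k. lia. rewrite comp_lt by lia. reflexivity.
Qed.

Lemma comp_1 K : (1 <= K)%nat -> compositions 1 K = [[K]].
Proof.
  intros HK. destruct K. lia. unfold compositions.
  rewrite seq_S, flat_map_app, flat_map_nil.
  - simpl. replace (K - K)%nat with O by lia. reflexivity.
  - intros k Hk. apply in_seq in Hk. replace (S K - k =? 0)%nat with false. reflexivity.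
    symmetry. apply Nat.eqb_neq. lia.
Qed.

Lemma comp_S r K : compositions (S r) K = flat_map (fun k => map (cons k) (compositions r (K - k))) (seq 1 K).
Proof. reflexivity. Qed.

Lemma comp_last r K f :
  rsum (compositions (S r) K) f =
  rsum (seq 1 K) (fun l => rsum (compositions r (K - l)) (fun ks => f (ks ++ [l]))).
Proof.
  revert K f. induction r; intros K f.
  - rewrite comp_S, rsum_flat_map. apply rsum_ext. intros k.
    rewrite rsum_map. simpl. destruct (K - k =? 0)%nat; simpl; auto.
  - rewrite comp_S, rsum_flat_map.
    rewrite (rsum_ext _ _ (fun k => rsum (seq 1 (K - k)) (fun l => rsum (compositions r (K - k - l)) (fun ks => f (k :: ks ++ [l]))))).
    2:{ intros k. rewrite rsum_map. rewrite IHr. reflexivity. }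
    rewrite rsum_swap. apply rsum_ext. intros l.
    rewrite comp_S, rsum_flat_map.
    apply rsum_ext. intros k. rewrite rsum_map. replace (K - k - l)%nat with (K - l - k)%nat by lia.
    reflexivity.
Qed.

Lemma removelast_app1 {A} (l : list A) a : removelast (l ++ [a]) = l.
Proof. apply removelast_last. Qed.

Lemma add_last_app ks l x : add_last (ks ++ [l]) x = ks ++ [(l + x)%nat].
Proof. unfold add_last. rewrite removelast_app1, last_last. reflexivity. Qed.

Lemma last_app1 ks (l : nat) : last (ks ++ [l]) 0%nat = l.
Proof. apply last_last. Qed.

Definition P (a b : nat) : nat -> R :=
  match a with O => delta0 | S a' => ac (repeat 1%nat a' ++ [S b]) end.

Lemma ac_repeat a : ac (repeat 1%nat a) = P a 0.
Proof. destruct a. reflexivity. simpl P. rewrite <- repeat_cons. reflexivity. Qed.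

Lemma thP_S a b : th (P (S a) (S b)) = P (S a) b.
Proof. exact (AR1 (repeat 1%nat a) (S b)). Qed.

Lemma thP_0 a : th (P (S a) 0) = cprod Jf (P a 0).
Proof. change (th (ac (repeat 1%nat a ++ [1%nat])) = cprod Jf (P a 0)). rewrite AR2, ac_repeat. reflexivity. Qed.

Lemma P_at0 a b : P (S a) b O = 0.
Proof. simpl P. apply ac_at0. destruct a; discriminate. Qed.

Definition Qs (r mm kk : nat) (N : nat) : R :=
  rsum (compositions r (kk + r)) (fun ks => INR (binn (last ks 0%nat + mm - 1) mm) * ac (add_last ks mm) N).

Definition Cone (r kk : nat) (N : nat) : R := rsum (compositions r (kk + r)) (fun ks => ac ks N).

Lemma th_rsum {T} (l : list T) (F : T -> nat -> R) : th (fun N => rsum l (fun x => F x N)) = fun N => rsum l (fun x => th (F x) N).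
Proof. apply functional_extensionality. intros N. unfold th. rewrite <- rsum_scal. reflexivity. Qed.

Lemma Qs_th r a b : th (Qs (S r) (S a) (S b)) = fun N => Qs (S r) a (S b) N + Qs (S r) (S a) b N.
Proof.
  unfold Qs. rewrite th_rsum. apply functional_extensionality. intros N.
  rewrite !comp_last.
  set (K := (S b + S r)%nat).
  replace (b + S r)%nat with (K - 1)%nat by (unfold K; lia).
  assert (HK : K = S (K - 1)) by (unfold K; lia).
  rewrite (rsum_ext_in (seq 1 K) _ (fun l => rsum (compositions r (K - l)) (fun ks => INR (binn (l + a - 1) a) * ac (ks ++ [(l + a)%nat]) N)
       + rsum (compositions r (K - l)) (fun ks => INR (binn (l + a - 1) (S a)) * ac (ks ++ [(l + a)%nat]) N))).
  2:{ intros l Hl. apply in_seq in Hl. rewrite <- rsum_plus. apply rsum_ext. intros ks.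
      rewrite add_last_app, last_app1.
      replace (binn (l + S a - 1) (S a)) with (binn (l + a - 1) a + binn (l + a - 1) (S a))%nat
        by (replace (l + S a - 1)%nat with (S (l + a - 1)) by lia; reflexivity).
      rewrite plus_INR.
      replace (l + S a)%nat with (S (l + a)) by lia. rewrite <- (AR1 ks (l + a)). unfold th. ring. }
  rewrite rsum_plus. f_equal.
  - apply rsum_ext. intros l. apply rsum_ext. intros ks. rewrite add_last_app, last_app1. reflexivity.
  - rewrite HK at 1. rewrite rsum_seq_S1.
    rewrite (rsum_zero _ (fun ks => INR (binn (1 + a - 1) (S a)) * _)).
    2:{ intros ks _. rewrite binn_gt by lia. simpl. ring. }
    rewrite Rplus_0_l. apply rsum_ext. intros l. 
    replace (K - S l)%nat with (K - 1 - l)%nat by lia.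
    apply rsum_ext. intros ks. rewrite add_last_app, last_app1.
    replace (S l + a - 1)%nat with (l + S a - 1)%nat by lia.
    replace (S l + a)%nat with (l + S a)%nat by lia. reflexivity.
Qed.

Lemma Cone_th r kk : th (Cone (S r) (S kk)) = fun N => cprod Jf (Cone r (S kk)) N + Cone (S r) kk N.
Proof.
  unfold Cone. rewrite th_rsum. apply functional_extensionality. intros N.
  rewrite !comp_last.
  set (K := (S kk + S r)%nat).
  replace (kk + S r)%nat with (K - 1)%nat by (unfold K; lia).
  assert (HK : K = S (K - 1)) by (unfold K; lia).
  rewrite HK at 1. rewrite rsum_seq_S1. f_equal.
  - rewrite (cprod_rsum_r Jf (compositions r (S kk + r)) ac).
    replace (K - 1)%nat with (S kk + r)%nat by (unfold K; lia).
    apply rsum_ext. intros ks. rewrite AR2. reflexivity.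
  - apply rsum_ext. intros l. replace (K - S l)%nat with (K - 1 - l)%nat by lia.
    apply rsum_ext. intros ks. rewrite AR1. reflexivity.
Qed.

Definition RHSs (r mm kk : nat) (N : nat) : R :=
  rsum (seq 1 (r - 1)) (fun j => (-1) ^ (j - 1) * cprod (P (r - j) mm) (P j kk) N).
Definition LHSs (r mm kk : nat) (N : nat) : R := Qs r mm kk N + (-1) ^ r * Qs r kk mm N.

Lemma binn_n0 n : binn n 0 = 1%nat.
Proof. destruct n; reflexivity. Qed.

Lemma Qs_m0 r kk : Qs (S r) 0 kk = Cone (S r) kk.
Proof.
  apply functional_extensionality. intros N. unfold Qs, Cone. apply rsum_ext_in.
  intros ks Hks. rewrite binn_n0. simpl INR. rewrite Rmult_1_l.
  unfold add_last. rewrite Nat.add_0_r, <- app_removelast_last. reflexivity.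
  eapply comp_nonnil; eauto.
Qed.

Lemma Qs_k0 r kk : Qs (S r) kk 0 = P (S r) kk.
Proof.
  apply functional_extensionality. intros N. unfold Qs. simpl (0 + S r)%nat.
  rewrite comp_rr. unfold rsum. cbn [fold_right repeat].
  rewrite repeat_cons, add_last_app, last_app1.
  replace (1 + kk - 1)%nat with kk by lia. rewrite binn_nn. simpl. ring.
Qed.

Lemma Cone_rr r : Cone (S r) 0 = P (S r) 0.
Proof.
  apply functional_extensionality. intros N. unfold Cone. simpl (0 + S r)%nat.
  rewrite comp_rr. unfold rsum. cbn [fold_right]. rewrite ac_repeat. ring.
Qed.

Lemma Cone_1 kk : Cone 1 kk = P 1 kk.
Proof.
  apply functional_extensionality. intros N. unfold Cone.
  rewrite comp_1 by lia. simpl. rewrite Nat.add_1_r. ring.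
Qed.

Lemma Cone_at0 r kk : Cone (S r) kk O = 0.
Proof. unfold Cone. apply rsum_zero. intros ks H. apply ac_at0. eapply comp_nonnil; eauto. Qed.

Lemma Qs_at0 r mm kk : Qs (S r) mm kk O = 0.
Proof.
  unfold Qs. apply rsum_zero. intros ks H. unfold add_last. rewrite ac_at0. ring.
  destruct (removelast ks); discriminate.
Qed.

Lemma RHSs_at0 r mm kk : RHSs r mm kk O = 0.
Proof.
  unfold RHSs. apply rsum_zero. intros j Hj. apply in_seq in Hj.
  rewrite cprod_at0. destruct j. lia. rewrite P_at0. ring.
Qed.

Lemma th_RHSs r mm kk : th (RHSs r mm kk) = fun N => rsum (seq 1 (r - 1)) (fun j => (-1) ^ (j - 1) *
   (cprod (th (P (r - j) mm)) (P j kk) N + cprod (P (r - j) mm) (th (P j kk)) N)).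
Proof.
  unfold RHSs. rewrite th_rsum. apply functional_extensionality. intros N. apply rsum_ext.
  intros j. pose proof (equal_f (th_cprod (P (r - j) mm) (P j kk)) N) as E. cbv beta in E.
  rewrite <- E. unfold th. ring.
Qed.

Lemma sq_m1 a : (-1) ^ a * (-1) ^ a = 1.
Proof. rewrite <- pow_add. replace (a + a)%nat with (2 * a)%nat by lia. rewrite pow_mult. replace ((-1) ^ 2) with 1 by (simpl; ring). apply pow1. Qed.

Lemma sign_flip r j : (1 <= j)%nat -> (j <= r - 1)%nat -> (-1) ^ (r - j - 1) = (-1) ^ r * (-1) ^ (j - 1).
Proof.
  intros H1 H2. replace r with ((j - 1) + (r - j - 1) + 2)%nat at 2 by lia.
  rewrite !pow_add. simpl pow.
  replace ((-1) ^ (j - 1) * (-1) ^ (r - j - 1) * (-1 * (-1 * 1)) * (-1) ^ (j - 1))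
    with (((-1) ^ (j - 1) * (-1) ^ (j - 1)) * (-1) ^ (r - j - 1)) by ring.
  rewrite sq_m1. ring.
Qed.

Lemma rsum_seq_rev n g : rsum (seq 1 n) g = rsum (seq 1 n) (fun j => g (S n - j)%nat).
Proof.
  revert g. induction n; intros g. reflexivity.
  rewrite rsum_seq_last, rsum_seq_S1. rewrite IHn.
  replace (S (S n) - 1)%nat with (S n) by lia. rewrite Rplus_comm. f_equal.
Qed.

Lemma RHSs_sym r mm kk : (1 <= r)%nat -> RHSs r kk mm = fun N => (-1) ^ r * RHSs r mm kk N.
Proof.
  intros Hr. apply functional_extensionality. intros N. unfold RHSs.
  rewrite rsum_seq_rev, <- rsum_scal. apply rsum_ext_in. intros j Hj. apply in_seq in Hj.
  replace (S (r - 1) - j)%nat with (r - j)%nat by lia.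
  replace (r - (r - j))%nat with j by lia.
  rewrite (cprod_comm (P j kk)).
  rewrite sign_flip by lia. ring.
Qed.

Lemma telescope n (g : nat -> R) :
  rsum (seq 1 n) (fun j => (-1) ^ (j - 1) * (g j + g (j - 1)%nat)) = g O - (-1) ^ n * g n.
Proof.
  induction n. simpl. ring.
  rewrite rsum_seq_last, IHn. replace (S n - 1)%nat with n by lia. simpl pow. ring.
Qed.

Lemma rsum_split_last n (F : nat -> R) : (1 <= n)%nat ->
  rsum (seq 1 n) F = rsum (seq 1 (n - 1)) F + F n.
Proof. intros H. destruct n. lia. rewrite rsum_seq_last. replace (S n - 1)%nat with n by lia. reflexivity. Qed.

Lemma cprod_mid X Y : cprod X (cprod Jf Y) = cprod Jf (cprod X Y).
Proof. rewrite <- cprod_assoc, (cprod_comm X Jf), cprod_assoc. reflexivity. Qed.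

Lemma thP_0' j : (1 <= j)%nat -> th (P j 0) = cprod Jf (P (j - 1) 0).
Proof. intros H. destruct j. lia. rewrite thP_0. simpl. rewrite Nat.sub_0_r. reflexivity. Qed.
Lemma thP_S' j b : (1 <= j)%nat -> th (P j (S b)) = P j b.
Proof. intros H. destruct j. lia. apply thP_S. Qed.

Lemma case_m1 r kk : (1 <= r)%nat -> (fun N => Cone r kk N + (-1) ^ r * P r kk N) = RHSs r 0 kk.
Proof.
  intros Hr. destruct r as [|r0]. lia. clear Hr.
  revert kk. induction r0 as [|r0 IHr]; intros kk.
  -
    rewrite Cone_1. apply functional_extensionality. intros N. unfold RHSs. simpl. ring.
  - set (R0 := S r0). induction kk as [|kk IHk].
    + rewrite Cone_rr. apply th_unique.
      * rewrite RHSs_at0. rewrite P_at0. ring.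
      * rewrite th_RHSs. apply functional_extensionality. intros N.
        transitivity ((1 + (-1) ^ S R0) * th (P (S R0) 0) N). { unfold th; ring. }
        rewrite thP_0.
        rewrite (rsum_ext_in _ _ (fun j => (-1) ^ (j - 1) *
            (cprod Jf (cprod (P (R0 - j) 0) (P j 0)) N + cprod Jf (cprod (P (R0 - (j - 1)) 0) (P (j - 1) 0)) N))).
        2:{ intros j Hj. apply in_seq in Hj.
            replace (S R0 - j)%nat with (S (R0 - j)) by lia. rewrite thP_0.
            rewrite (thP_0' j) by lia.
            rewrite cprod_assoc, cprod_mid.
            replace (S (R0 - j)) with (R0 - (j - 1))%nat by lia.
            replace (S (j - 1)) with j by lia. reflexivity. }
        replace (S R0 - 1)%nat with R0 by lia.
        rewrite (telescope R0 (fun i => cprod Jf (cprod (P (R0 - i) 0) (P i 0)) N)).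
        replace (R0 - 0)%nat with R0 by lia. replace (R0 - R0)%nat with O by lia.
        change (P 0 0) with delta0. rewrite cprod_delta, cprod_delta_l. change ((-1) ^ S R0) with (-1 * (-1) ^ R0). ring.
    + apply th_unique.
      * rewrite RHSs_at0. unfold R0. rewrite Cone_at0, P_at0. ring.
      * rewrite th_RHSs. apply functional_extensionality. intros N.
        transitivity (th (Cone (S R0) (S kk)) N + (-1) ^ S R0 * th (P (S R0) (S kk)) N). { unfold th; ring. }
        rewrite Cone_th, thP_S.
        rewrite (rsum_ext_in _ _ (fun j => (-1) ^ (j - 1) * cprod Jf (cprod (P (R0 - j) 0) (P j (S kk))) N +
            (-1) ^ (j - 1) * cprod (P (S R0 - j) 0) (P j kk) N)).
        2:{ intros j Hj. apply in_seq in Hj.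
            replace (S R0 - j)%nat with (S (R0 - j)) at 1 by lia. rewrite thP_0.
            rewrite (thP_S' j) by lia.
            rewrite cprod_assoc. replace (S (j - 1)) with j by lia. ring. }
        rewrite rsum_plus.
        replace (rsum (seq 1 (S R0 - 1)) (fun j => (-1) ^ (j - 1) * cprod (P (S R0 - j) 0) (P j kk) N))
          with (RHSs (S R0) 0 kk N) by reflexivity.
        rewrite <- IHk.
        replace (S R0 - 1)%nat with R0 by lia.
        
        assert (E : (fun N => rsum (seq 1 R0) (fun j => (-1) ^ (j - 1) * cprod (P (R0 - j) 0) (P j (S kk)) N)) = Cone R0 (S kk)).
        { apply functional_extensionality. intros M.
          rewrite rsum_split_last by (unfold R0; lia).
          replace (rsum (seq 1 (R0 - 1)) (fun j => (-1) ^ (j - 1) * cprod (P (R0 - j) 0) (P j (S kk)) M))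
            with (RHSs R0 0 (S kk) M) by reflexivity.
          rewrite <- IHr. replace (R0 - R0)%nat with O by lia. simpl P at 1. rewrite cprod_delta_l.
          unfold R0. replace (S r0 - 1)%nat with r0 by lia.
          change (ac (repeat 1%nat r0 ++ [S (S kk)])) with (P (S r0) (S kk)).
          change ((-1) ^ S r0) with (-1 * (-1) ^ r0). ring. }
        rewrite (rsum_ext _ (fun j => (-1) ^ (j - 1) * cprod Jf (cprod (P (R0 - j) 0) (P j (S kk))) N)
           (fun j => cprod Jf (fun M => (-1) ^ (j - 1) * cprod (P (R0 - j) 0) (P j (S kk)) M) N)).
        2:{ intros j. rewrite cprod_scal_r. reflexivity. }
        pose proof (equal_f (cprod_rsum_r Jf (seq 1 R0) (fun j M => (-1) ^ (j - 1) * cprod (P (R0 - j) 0) (P j (S kk)) M)) N) as X.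
        cbv beta in X. rewrite <- X.
        rewrite E. ring.
Qed.

Lemma main_m1 r kk : (1 <= r)%nat -> LHSs r 0 kk = RHSs r 0 kk.
Proof.
  intros Hr. rewrite <- case_m1 by auto. destruct r. lia.
  apply functional_extensionality. intros N. unfold LHSs. rewrite Qs_m0, Qs_k0. reflexivity.
Qed.

Lemma main_seq mm kk r : (1 <= r)%nat -> LHSs r mm kk = RHSs r mm kk.
Proof.
  intros Hr. destruct r as [|r']. lia.
  revert kk. induction mm as [|a IHa]; intros kk.
  - apply main_m1. lia.
  - induction kk as [|b IHb].
    + transitivity (fun N => (-1) ^ S r' * LHSs (S r') 0 (S a) N).
      { apply functional_extensionality. intros N. unfold LHSs.
        rewrite Rmult_plus_distr_l, <- Rmult_assoc, sq_m1. ring. }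
      rewrite main_m1 by lia. rewrite (RHSs_sym (S r') 0 (S a)) by lia. reflexivity.
    + apply th_unique.
      * unfold LHSs. rewrite !Qs_at0, RHSs_at0. ring.
      * transitivity (fun N => LHSs (S r') a (S b) N + LHSs (S r') (S a) b N).
        { apply functional_extensionality. intros N. unfold LHSs.
          pose proof (equal_f (Qs_th r' a b) N) as E1. pose proof (equal_f (Qs_th r' b a) N) as E2.
          cbv beta in E1, E2. unfold th in *. rewrite Rmult_plus_distr_l, E1.
          replace (INR N * ((-1) ^ S r' * Qs (S r') (S b) (S a) N)) with ((-1) ^ S r' * (INR N * Qs (S r') (S b) (S a) N)) by ring.
          rewrite E2. ring. }
        rewrite IHa, IHb, th_RHSs. apply functional_extensionality. intros N.
        unfold RHSs. rewrite <- rsum_plus. apply rsum_ext_in. intros j Hj. apply in_seq in Hj.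
        rewrite (thP_S' (S r' - j)) by lia. rewrite (thP_S' j) by lia. ring.
Qed.

Lemma psum_bound F N c : (forall n, (n < N)%nat -> 0 <= F n <= c) -> 0 <= psum F N <= INR N * c.
Proof.
  induction N; intros H. simpl. lra.
  simpl psum. rewrite S_INR. assert (X := H N ltac:(lia)).
  assert (IH : 0 <= psum F N <= INR N * c) by (apply IHN; intros; apply H; lia). lra.
Qed.

Lemma Hs_bound l N : 0 <= Hs l N <= INR N ^ length l.
Proof.
  revert N. induction l as [|k rest IH]; intros N.
  - simpl. lra.
  - simpl Hs. simpl length. simpl pow.
    apply psum_bound. intros n Hn.
    match goal with |- context [if ?c then _ else _] => destruct c eqn:E end.
    + apply andb_prop in E as [E _]. assert (E' : (1 <= n)%nat) by (destruct n; [discriminate|lia]).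
      assert (Hn1 : 1 <= INR n) by (apply (le_INR 1); exact E').
      assert (Hp : 1 <= INR n ^ k) by (apply pow_R1_Rle; lra).
      destruct (IH n) as [H0 H1].
      split. apply Rmult_le_pos. auto. apply Rlt_le, Rinv_0_lt_compat. lra.
      apply Rle_trans with (Hs rest n).
      * unfold Rdiv. rewrite <- (Rmult_1_r (Hs rest n)) at 2. apply Rmult_le_compat_l; auto.
        rewrite <- Rinv_1. apply Rinv_le_contravar; lra.
      * eapply Rle_trans. apply H1. apply pow_incr. split. apply pos_INR. apply le_INR. lia.
    + split. lra. apply pow_le, pos_INR.
Qed.

Lemma pb_ac ks : pb (ac ks).
Proof.
  destruct ks as [|k0 ks'].
  - exists 1, O. intros N. simpl. unfold delta0. destruct (N =? 0)%nat; rewrite ?Rabs_R1, ?Rabs_R0; lra.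
  - exists (2 ^ length (k0 :: ks')), (length (k0 :: ks')). intros N. unfold ac, Acoef.
    destruct (rev (k0 :: ks')) as [|k rest] eqn:E.
    { rewrite Rabs_R0. apply Rmult_le_pos. apply pow_le; lra. apply pow_le. pose proof (pos_INR N); lra. }
    assert (HL : (length rest < length (k0 :: ks'))%nat).
    { apply (f_equal (@length nat)) in E. rewrite length_rev in E. simpl in *. lia. }
    rewrite Rabs_mult, Rabs_pos_eq by (apply pow_le; lra).
    apply Rmult_le_compat_l. apply pow_le; lra.
    match goal with |- context [if ?c then _ else _] => destruct c eqn:E2 end.
    + apply andb_prop in E2 as [E2 _]. assert (E2' : (1 <= N)%nat) by (destruct N; [discriminate|lia]).
      assert (Hn1 : 1 <= INR N) by (apply (le_INR 1); lia).
      assert (Hp : 1 <= INR N ^ k) by (apply pow_R1_Rle; lra).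
      destruct (Hs_bound rest N) as [H0 H1].
      rewrite Rabs_pos_eq.
      2:{ apply Rmult_le_pos. auto. apply Rlt_le, Rinv_0_lt_compat. lra. }
      apply Rle_trans with (Hs rest N).
      * unfold Rdiv. rewrite <- (Rmult_1_r (Hs rest N)) at 2. apply Rmult_le_compat_l; auto.
        rewrite <- Rinv_1. apply Rinv_le_contravar; lra.
      * eapply Rle_trans. apply H1. eapply Rle_trans with ((INR N + 1) ^ length rest).
        apply pow_incr. lra. apply Rle_pow. lra. lia.
    + rewrite Rabs_R0. apply pow_le. pose proof (pos_INR N); lra.
Qed.

Lemma pb_P a b : pb (P a b).
Proof. destruct a. apply (pb_ac []). apply pb_ac. Qed.

Lemma pb_rsum {T} (l : list T) (c : T -> R) (a : T -> nat -> R) :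
  (forall x, In x l -> pb (a x)) -> pb (fun N => rsum l (fun x => c x * a x N)).
Proof.
  induction l; intros H; simpl.
  - apply pb_zero.
  - apply pb_plus. apply pb_scal. apply H; simpl; auto. apply IHl. intros; apply H; simpl; auto.
Qed.

Lemma Csum_ext_in {T} (l : list T) (f g : T -> C) : (forall x, In x l -> f x = g x) -> Csum l f = Csum l g.
Proof. induction l; simpl; intros H; auto. rewrite H, IHl; auto. Qed.

Lemma Csum_Sv {T} (l : list T) (c : T -> R) (a : T -> nat -> R) z : Cmod z < 1 ->
  (forall x, In x l -> pb (a x)) ->
  Csum l (fun x => Cmult (RtoC (c x)) (Sv (a x) z)) = Sv (fun N => rsum l (fun x => c x * a x N)) z.
Proof.
  intros Hz. induction l; intros H; simpl.
  - symmetry. apply Sv_zero. auto.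
  - rewrite Sv_plus; auto.
    + rewrite Sv_scal, IHl; auto. intros; apply H; simpl; auto. apply H; simpl; auto.
    + apply pb_scal, H. simpl; auto.
    + apply pb_rsum. intros; apply H; simpl; auto.
Qed.

Lemma Apoly_ac ks y z : Apoly (ks ++ [y]) z = Sv (ac (ks ++ [y])) z.
Proof. rewrite ac_app. reflexivity. Qed.
Close Scope R_scope.

Lemma last_ge1 r K ks : In ks (compositions (S r) K) -> (1 <= last ks 0)%nat.
Proof.
  intros H. pose proof (comp_nonnil _ _ _ H) as Hn. apply comp_In in H as [_ H].
  apply H. rewrite (app_removelast_last 0%nat Hn) at 2. apply in_or_app. right. left. reflexivity.
Qed.

Lemma pb_Qs r mm kk : pb (Qs r mm kk).
Proof. unfold Qs. apply (pb_rsum _ (fun ks => INR (binn (last ks 0%nat + mm - 1) mm)) (fun ks => ac (add_last ks mm))). intros; apply pb_ac. Qed.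

Lemma Qs_Csum r mm kk z : (Cmod z < 1)%R ->
  Csum (compositions (S r) (S kk + S r - 1)%nat)
    (fun ks => Cmult (Cbinom (last ks 0 + S mm - 2)%nat (S mm - 1)%nat) (Apoly (add_last ks (S mm - 1)%nat) z))
  = Sv (Qs (S r) mm kk) z.
Proof.
  intros Hz. replace (S kk + S r - 1)%nat with (kk + S r)%nat by lia. replace (S mm - 1)%nat with mm by lia.
  rewrite (Csum_ext_in _ _ (fun ks => Cmult (RtoC (INR (binn (last ks 0%nat + mm - 1) mm))) (Sv (ac (add_last ks mm)) z))).
  - rewrite Csum_Sv; auto. intros; apply pb_ac.
  - intros ks Hks. pose proof (last_ge1 _ _ _ Hks). f_equal.
    + unfold Cbinom. f_equal. replace (last ks 0 + S mm - 2)%nat with (last ks 0 + mm - 1)%nat by lia.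
      apply binom_binn. lia.
    + unfold add_last. apply Apoly_ac.
Qed.

Lemma RHS_Csum r mm kk z : (Cmod z < 1)%R ->
  Csum (seq 1 (S r - 1)%nat)
    (fun j => Cmult (RtoC ((-1) ^ (j - 1)%nat)%R)
                (Cmult (Apoly (repeat 1%nat (S r - 1 - j)%nat ++ [S mm]) z)
                       (Apoly (repeat 1%nat (j - 1)%nat ++ [S kk]) z)))
  = Sv (RHSs (S r) mm kk) z.
Proof.
  intros Hz.
  rewrite (Csum_ext_in _ _ (fun j => Cmult (RtoC ((-1) ^ (j - 1))%R) (Sv (cprod (P (S r - j) mm) (P j kk)) z))).
  - rewrite Csum_Sv; auto. intros; apply pb_cprod; apply pb_P.
  - intros j Hj. apply in_seq in Hj. f_equal.
    rewrite Sv_mult; auto using pb_P.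
    rewrite !Apoly_ac. f_equal; f_equal.
    + replace (S r - j)%nat with (S (S r - 1 - j)) by lia. reflexivity.
    + destruct j; [lia|]. simpl. rewrite Nat.sub_0_r. reflexivity.
Qed.

Theorem mainTheorem15 (m k r : nat) (z : C) :
  (0 < m)%nat -> (0 < k)%nat -> (0 < r)%nat -> (Cmod z < 1)%R ->
  Cplus
    (Csum (compositions r (k + r - 1)%nat)
       (fun ks => Cmult (Cbinom (last ks 0 + m - 2)%nat (m - 1)%nat) (Apoly (add_last ks (m - 1)%nat) z)))
    (Cmult (RtoC ((-1) ^ r)%R)
       (Csum (compositions r (m + r - 1)%nat)
          (fun ks => Cmult (Cbinom (last ks 0 + k - 2)%nat (k - 1)%nat) (Apoly (add_last ks (k - 1)%nat) z))))
  =
  Csum (seq 1 (r - 1)%nat)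
    (fun j => Cmult (RtoC ((-1) ^ (j - 1)%nat)%R)
                (Cmult (Apoly (repeat 1%nat (r - 1 - j)%nat ++ [m]) z)
                       (Apoly (repeat 1%nat (j - 1)%nat ++ [k]) z))).
Proof.
  intros Hm Hk Hr Hz.
  destruct m as [|mm]; [lia|]. destruct k as [|kk]; [lia|]. destruct r as [|r']; [lia|].
  rewrite (Qs_Csum r' mm kk z Hz), (Qs_Csum r' kk mm z Hz), (RHS_Csum r' mm kk z Hz).
  rewrite <- Sv_scal by (auto; apply pb_Qs).
  rewrite <- Sv_plus; auto using pb_Qs.
  2:{ apply pb_scal, pb_Qs. }
  change (Sv (LHSs (S r') mm kk) z = Sv (RHSs (S r') mm kk) z).
  rewrite main_seq by lia. reflexivity.
Qed.
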